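(* Let $(\mathcal{X},\mu)$ be a probability space without atoms. Let $\Psi:(0,1]\to\mathbb{R}_+$ satisfy the following: - $\Psi(1)>0$ and $\Psi$ is decreasing; - $\psi(s):=s\Psi(s)$ is increasing and $\psi(0_+)=0$; - $\int_0\frac{ds}{s\Psi(s)}<\infty$; - $t\mapsto\Psi(e^{-t})$ is convex near $\infty$. Then there exists a function $\alpha$ on $[1,\infty)$ such that $t\mapsto t\alpha(t)>0$ is increasing on $[1,\infty)$, $$\int_1^\infty\frac{dt}{t\alpha(t)}<\infty,$$ and $$\alpha\Big(\frac{\|f\|_*}{\|f\|_1}\Big)\|f\|_*\le\|f\|_{\Lambda_\psi}$$ for all measurable $f$ for which the left-hand side is defined.
   Context: Norms: for a measurable $f$ let $N_f(t)=\mu\{x:|f(x)|>t\}$ and $\|f\|_1=\int|f|\,d\mu$. The Lorentz norm is $$\|f\|_{\Lambda_\psi}=\int_0^\infty\psi(N_f(t))\,dt,$$ equivalently $\int_0^1f^*(s)\,d\psi(s)$, where $f^*$ is the decreasing rearrangement of $|f|$. The norm $\|f\|_*$ is $\|f\|_{\Lambda_{\psi_0}}$ with $\psi_0(s)=s\ln(e/s)$. Note that $\|f\|_*\ge\|f\|_1$. *)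

(* Defs.v *)
From HB Require Import structures.
From mathcomp Require Import all_boot all_order all_algebra.
From mathcomp Require Import all_classical all_reals all_analysis.
Set Implicit Arguments. Unset Strict Implicit. Unset Printing Implicit Defensive.
Import Order.TTheory GRing.Theory Num.Theory.
Import numFieldNormedType.Exports.
Local Open Scope classical_set_scope.
Local Open Scope ring_scope.

Definition atomless d (T : measurableType d) (R : realType)
  (mu : {measure set T -> \bar R}) : Prop :=
  forall A : set T, measurable A -> (0 < mu A)%E ->
    exists B : set T, [/\ measurable B, B `<=` A, (0 < mu B)%E & (mu B < mu A)%E].

(* distribution function N_f(t) = mu{ |f| > t } (finite for a probability) *)
Definition distr_fun d (T : measurableType d) (R : realType)
  (mu : probability T R) (f : T -> R) (t : R) : R :=
  fine (mu [set x | t < `|f x|]).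

(* psi extended by psi(0) = 0 (the value psi(0+) = 0) *)
Definition psi_of (R : realType) (Psi : R -> R) (s : R) : R :=
  if s <= 0 then 0 else s * Psi s.

Definition lorentz_norm d (T : measurableType d) (R : realType)
  (mu : probability T R) (psi : R -> R) (f : T -> R) : \bar R :=
  (\int[lebesgue_measure]_(t in `[0%R, +oo[%classic) (psi (distr_fun mu f t))%:E)%E.

Definition psi0 (R : realType) (s : R) : R :=
  if s <= 0 then 0 else s * ln (expR 1 / s).

Definition star_norm d (T : measurableType d) (R : realType)
  (mu : probability T R) (f : T -> R) : \bar R :=
  lorentz_norm mu (@psi0 R) f.

Definition L1_norm d (T : measurableType d) (R : realType)
  (mu : probability T R) (f : T -> R) : \bar R :=
  (\int[mu]_x (`|f x|)%:E)%E.

(* Main.v *)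
Require Import Defs.
From HB Require Import structures.
From mathcomp Require Import all_boot all_order all_algebra.
From mathcomp Require Import all_classical all_reals all_analysis.
From mathcomp Require Import ring lra measurable_realfun ftc.
Import Order.TTheory GRing.Theory Num.Theory.
Import numFieldNormedType.Exports.
Local Open Scope classical_set_scope.
Local Open Scope ring_scope.
Lemma nonincr_on_measurable (R : realType) (i : interval R) (f : R -> R) :
  {in [set` i] &, forall s t, s <= t -> f t <= f s} ->
  measurable_fun [set` i] f.
Proof.
move=> f_ni.
apply: (measurability (@measurable_realfun.RGenCInfty.G R)) => [|/= _ [_] [r] -> <-].
  exact: measurable_realfun.RGenCInfty.measurableE.
apply: is_interval_measurable => s t/= [si fs] [ti ft] u /andP[su ut].
have iu : [set` i] u by apply: (interval_is_interval si ti); rewrite su ut.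
split => //.
move: fs ft; rewrite /= !in_itv/= !andbT => fs ft.
by rewrite (le_trans ft)// f_ni// ?inE.
Qed.


Section layer.
Context d (T : measurableType d) (R : realType) (mu : probability T R).
Variable f : T -> R.
Hypothesis mf : measurable_fun setT f.
Definition absf x := `|f x|.
Let mabsf : measurable_fun setT absf.
Proof. exact: measurableT_comp. Qed.
HB.instance Definition _ := isMeasurableFun.Build _ _ _ _ absf mabsf.

Lemma L1_layer : L1_norm mu f =
  (\int[lebesgue_measure]_(t in `[0%R, +oo[%classic) (distr_fun mu f t)%:E)%E.
Proof.
have := @ge0_expectation_ccdf _ _ R mu absf (fun x => normr_ge0 _).
rewrite expectation_def /L1_norm => ->.
apply: eq_integral => t _.
have E : [set x | t < `|f x|] = absf @^-1` `]t, +oo[%classic.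
  by apply/seteqP; split => x /=; rewrite in_itv/= andbT.
rewrite /distr_fun /ccdf fineK ?fin_num_measure// E//.
rewrite -[X in measurable X]setTI; exact: mabsf.
Qed.
End layer.

Section Nfacts.
Context d (T : measurableType d) (R : realType) (mu : probability T R).
Variable f : T -> R.
Hypothesis mf : measurable_fun setT f.

Let mset t : measurable [set x | t < `|f x|].
Proof.
rewrite (_ : [set x | t < `|f x|] = (fun x => `|f x|) @^-1` `]t, +oo[%classic).
  rewrite -[X in measurable X]setTI; apply: (measurableT_comp _ mf) => //.
by apply/seteqP; split => x /=; rewrite in_itv/= andbT.
Qed.

Lemma N_ge0 t : 0 <= distr_fun mu f t.
Proof. by rewrite /distr_fun fine_ge0. Qed.

Lemma N_le1 t : distr_fun mu f t <= 1.
Proof.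
rewrite /distr_fun -lee_fin fineK ?fin_num_measure//.
exact: probability_le1.
Qed.

Lemma N_ni s t : s <= t -> distr_fun mu f t <= distr_fun mu f s.
Proof.
move=> st; rewrite /distr_fun fine_le ?fin_num_measure//.
apply: le_measure; rewrite ?inE//.
by move=> x /= tx; apply: le_lt_trans tx.
Qed.
End Nfacts.

Lemma psi0E (R : realType) (s : R) : 0 < s -> psi0 s = s * (1 - ln s).
Proof.
move=> s0; rewrite /psi0 leNgt s0/= ln_div ?posrE ?expR_gt0// expRK.
by [] || reflexivity.
Qed.

Lemma ln_le_sub1 (R : realType) (x : R) : 0 < x -> ln x <= x - 1.
Proof.
move=> x0; have h : 1 + (x - 1) = x by ring.
have := @le_ln1Dx R (x - 1); rewrite h; apply; lra.
Qed.

Lemma psi0_ge (R : realType) (s : R) : 0 <= s <= 1 -> s <= psi0 s.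
Proof.
case/andP => s0 s1; have [sp|sn] := ltP 0 s.
  rewrite psi0E//; have := ln_le0 s1; nra.
rewrite /psi0 ifT //; lra.
Qed.

Lemma psi0_ge0 (R : realType) (s : R) : 0 <= s <= 1 -> 0 <= psi0 s.
Proof. by move=> h; case/andP: (h) => s0 _; exact: (le_trans s0 (@psi0_ge R s h)). Qed.

Lemma psi0_mono (R : realType) (s t : R) : 0 <= s -> s <= t -> t <= 1 -> psi0 s <= psi0 t.
Proof.
move=> s0 st t1.
have [->|sp] := eqVneq s 0.
  rewrite {1}/psi0 lexx; apply: psi0_ge0; lra.
have sp' : 0 < s by rewrite lt_def sp s0.
have tp : 0 < t by lra.
rewrite !psi0E//.
have h1 : ln t <= 0 := ln_le0 t1.
have h2 : ln t - ln s <= t / s - 1.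
  rewrite -ln_div ?posrE//; apply: ln_le_sub1; exact: divr_gt0.
have h3 : s * (ln t - ln s) <= t - s.
  have e : s * (t / s - 1) = t - s by rewrite mulrBr mulr1 mulrC divfK.
  by rewrite -e; apply: ler_wpM2l.
nra.
Qed.

Lemma subgrad (R : realType) (phi : R -> R) (T0 m : R) :
  (forall x y l, T0 <= x -> T0 <= y -> 0 <= l <= 1 ->
     phi (l * x + (1 - l) * y) <= l * phi x + (1 - l) * phi y) ->
  (forall x y, T0 <= x -> x <= y -> phi x <= phi y) ->
  T0 < m ->
  exists k, 0 <= k /\ forall y, T0 <= y -> phi m + k * (y - m) <= phi y.
Proof.
move=> cvx mono Tm.
have three x y : T0 <= x -> x < m -> m < y ->
    (y - m) * (phi m - phi x) <= (m - x) * (phi y - phi m).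
  move=> Tx xm my.
  have yx : 0 < y - x by lra.
  pose l := (y - m) / (y - x).
  have l0 : 0 <= l by rewrite divr_ge0 //; lra.
  have l1 : l <= 1 by rewrite ler_pdivrMr //; lra.
  have em : l * x + (1 - l) * y = m.
    rewrite /l; field; lra.
  have Ty : T0 <= y by lra.
  have := cvx x y l Tx Ty; rewrite l0 l1 em => /(_ isT) H.
  have H2 := ler_wpM2l (ltW yx) H.
  have e : (y - x) * (l * phi x + (1 - l) * phi y) = (y - m) * phi x + (m - x) * phi y.
    rewrite /l; field; lra.
  rewrite e in H2; nra.
pose sl x := (phi m - phi x) / (m - x).
pose S := [set sl x | x in [set x | T0 <= x < m]].
have slB x : T0 <= x < m -> sl x <= phi (m + 1) - phi m.
  case/andP => Tx xm; rewrite /sl ler_pdivrMr; last lra.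
  have mm : m < m + 1 by lra.
  have := three x (m + 1) Tx xm mm; nra.
have hs : has_sup S.
  split; first by exists (sl T0), T0 => //=; rewrite lexx Tm.
  by exists (phi (m + 1) - phi m) => _ [x xS <-]; exact: slB.
have sup_ub := sup_upper_bound hs.
exists (sup S); split.
  apply: le_trans (sup_ub (sl T0) _); last by exists T0 => //=; rewrite lexx Tm.
  by rewrite /sl; apply: divr_ge0; rewrite subr_ge0; [apply: mono|]; lra.
move=> y Ty.
have [ym|my|->] := ltgtP y m.
- have : sl y <= sup S by apply: sup_ub; exists y => //=; rewrite Ty ym.
  rewrite /sl ler_pdivrMr; last lra.
  nra.
- have : sup S <= (phi y - phi m) / (y - m).
    apply: ge_sup; first by exists (sl T0), T0 => //=; rewrite lexx Tm.
    move=> _ [x /andP[Tx xm] <-]; rewrite /sl ler_pdivrMr; last lra.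
    rewrite mulrAC ler_pdivlMr; last lra.
    have := three x y Tx xm my; nra.
  rewrite ler_pdivlMr; last lra.
  nra.
- by rewrite subrr mulr0 addr0.
Qed.
Section intbound.
Variable R : realType.
Variable Psi : R -> R.
Hypothesis Psi_ge0 : forall s, 0 < s <= 1 -> 0 <= Psi s.
Hypothesis Psi1 : 0 < Psi 1.
Hypothesis Psi_dec : forall s t, 0 < s -> s <= t -> t <= 1 -> Psi t <= Psi s.
Hypothesis psi_inc : forall s t, 0 < s -> s <= t -> t <= 1 -> s * Psi s <= t * Psi t.

Lemma Psi_gt0 s : 0 < s <= 1 -> 0 < Psi s.
Proof. by case/andP => s0 s1; apply: (lt_le_trans Psi1); apply: Psi_dec. Qed.

Definition phi (u : R) := Psi (expR (- u)).

Lemma expN_le1 (u : R) : 0 <= u -> expR (- u) <= 1.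
Proof. by move=> u0; rewrite expR_le1 oppr_le0. Qed.

Lemma phi_ge u : 0 <= u -> Psi 1 <= phi u.
Proof. by move=> u0; apply: Psi_dec => //; [exact: expR_gt0|exact: expN_le1]. Qed.

Lemma phi_gt0 u : 0 <= u -> 0 < phi u.
Proof. by move=> u0; exact: (lt_le_trans Psi1 (phi_ge _ u0)). Qed.

Lemma phi_mono u v : 0 <= u -> u <= v -> phi u <= phi v.
Proof.
move=> u0 uv; apply: Psi_dec; first exact: expR_gt0.
  by rewrite ler_expR lerN2.
exact: expN_le1.
Qed.

Let h (s : R) := ((s * Psi s)^-1)%:E.

Let mh : measurable_fun (`]0%R, 1%R]%classic : set R) h.
Proof.
apply/measurable_EFinP; apply: nonincr_on_measurable => s t.
rewrite !inE /= !in_itv /= => /andP[s0 s1] /andP[t0 t1] st.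
have sp : 0 < s * Psi s by rewrite mulr_gt0// Psi_gt0// s0.
rewrite lef_pV2 ?posrE//; first exact: psi_inc.
exact: (lt_le_trans sp (psi_inc _ _ s0 st t1)).
Qed.

Let E (n : nat) : set R := `]expR (- n.+1%:R : R), expR (- n%:R : R)]%classic.

Let EP n s : E n s -> 0 < s <= 1.
Proof.
rewrite /E /= in_itv /= => /andP[a b]; apply/andP; split.
  exact: lt_trans (expR_gt0 _) a.
by apply: (le_trans b); apply: expN_le1.
Qed.

Let Esub : \bigcup_n E n `<=` `]0%R, 1%R]%classic.
Proof. by move=> s [n _ /EP]; rewrite /= in_itv. Qed.

Let triv_aux i j s : E i s -> E j s -> (i <= j)%N.
Proof.
rewrite /E /= !in_itv /= => /andP[a b] /andP[c d].
rewrite leqNgt; apply/negP => ji.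
have : expR (- i%:R) <= expR (- j.+1%:R :> R).
  by rewrite ler_expR lerN2 ler_nat.
move=> h1; have := le_lt_trans h1 c; rewrite ltNge b //.
Qed.

Lemma sum_b_le : (\sum_(n <oo) ((1 - expR (-1)) / phi n%:R)%:E <=
   \int[lebesgue_measure]_(s in `]0%R, 1%R]%classic) h s)%E.
Proof.
have mE n : measurable (E n) by exact: measurable_itv.
apply: (le_trans (y := (\int[lebesgue_measure]_(s in \bigcup_n E n) h s)%E)); last first.
  apply: ge0_subset_integral.
  - by apply: bigcup_measurable => n _; exact: measurable_itv.
  - exact: measurable_itv.
  - exact: mh.
  - move=> s; rewrite /= in_itv /= => /andP[s0 s1]; rewrite lee_fin invr_ge0.
    by apply: mulr_ge0; [exact: ltW | apply: Psi_ge0; rewrite s0 s1].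
  - exact: Esub.
rewrite ge0_integral_bigcup //; first last.
- move=> i j _ _ [s [Ei Ej]]; apply/eqP; rewrite eqn_leq.
  by rewrite (triv_aux _ _ _ Ei Ej) (triv_aux _ _ _ Ej Ei).
- move=> s /Esub; rewrite /= in_itv /= => /andP[s0 s1]; rewrite lee_fin invr_ge0.
  by apply: mulr_ge0; [exact: ltW | apply: Psi_ge0; rewrite s0 s1].
- apply: measurable_funS mh; first exact: measurable_itv.
  exact: Esub.
apply: lee_nneseries => n _.
  move=> _; rewrite lee_fin divr_ge0 ?ltW ?phi_gt0// subr_ge0 expR_le1; lra.
set c := ((expR (- n%:R) * phi n%:R)^-1).
apply: (le_trans (y := (\int[lebesgue_measure]_(s in E n) (cst c%:E) s)%E)); last first.
  apply: ge0_le_integral.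
  - exact: measurable_itv.
  - by move=> s _; rewrite /= lee_fin invr_ge0 mulr_ge0 ?expR_ge0 ?ltW ?phi_gt0.
  - exact: measurable_cst.
  - apply: measurable_funS mh; first exact: measurable_itv.
    by move=> s /EP; rewrite /= in_itv.
  move=> s /[dup] /EP /andP[s0 s1]; rewrite /E /= in_itv /= => /andP[_ sn].
  rewrite /h /c lee_fin lef_pV2 ?posrE ?mulr_gt0 ?expR_gt0 ?phi_gt0 ?Psi_gt0 ?s0//.
  by apply: psi_inc => //; apply: expN_le1.
rewrite integral_cst //; last exact: measurable_itv.
have := @lebesgue_measure_itv R `]expR (- n.+1%:R), expR (- n%:R)].
rewrite /= lte_fin ltr_expR ltrN2 ltr_nat ltnSn => ->.
rewrite -EFinD -EFinM lee_fin.
have e1 : expR (- n.+1%:R) = expR (- n%:R) * expR (-1) :> R.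
  by rewrite -natr1 opprD expRD.
have en : 0 < expR (- n%:R) :> R by exact: expR_gt0.
have pn : 0 < phi n%:R by exact: phi_gt0.
rewrite e1 /c le_eqVlt; apply/orP; left; apply/eqP.
field; rewrite ?gt_eqF //.
Qed.

Lemma int_alpha_lt (kap : R) : 0 < kap ->
  (\int[lebesgue_measure]_(s in `]0%R, 1%R]%classic) ((s * Psi s)^-1)%:E < +oo)%E ->
  (\int[lebesgue_measure]_(t in `[1%R, +oo[%classic)
      ((kap * phi (Num.max (t - 1) 0))^-1)%:E < +oo)%E.
Proof.
move=> k0 hint.
set g := fun t : R => ((kap * phi (Num.max (t - 1) 0))^-1)%:E.
have gpos t : 0 < kap * phi (Num.max (t - 1) 0).
  by rewrite mulr_gt0 ?phi_gt0// le_max lexx orbT.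
have g0 t : (0 <= g t)%E by rewrite lee_fin invr_ge0 ltW.
have mg : measurable_fun (`[1%R, +oo[%classic : set R) g.
  apply/measurable_EFinP; apply: nonincr_on_measurable => s t.
  rewrite !inE /= !in_itv /= !andbT => s1 t1 st.
  rewrite lef_pV2 ?posrE// ler_pM2l// phi_mono//; first by rewrite le_max lexx orbT.
  rewrite !max_l ?subr_ge0//; lra.
pose F (n : nat) : set R := `[n.+1%:R, n.+2%:R[%classic.
have UA : `[1%R, +oo[%classic = \bigcup_n F n.
  apply/seteqP; split => t /=.
    rewrite in_itv /= andbT => t1; exists (Num.trunc (t - 1)) => //=.
    have := @truncn_itv R (t - 1); rewrite subr_ge0 => /(_ t1) /andP[a b].
    rewrite /F /= in_itv /= -!natr1; rewrite -!natr1 in b.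
    apply/andP; split; lra.
  move=> [n _]; rewrite /F /= !in_itv /= andbT => /andP[a _].
  apply: le_trans a; rewrite ler1n //.
have tF : trivIset setT F.
  have aux i j t : F i t -> F j t -> (i <= j)%N.
    rewrite /F /= !in_itv /= => /andP[a b] /andP[c e].
    by have := le_lt_trans a e; rewrite ltr_nat !ltnS.
  move=> i j _ _ [t [Fi Fj]]; apply/eqP; rewrite eqn_leq.
  by rewrite (aux _ _ _ Fi Fj) (aux _ _ _ Fj Fi).
rewrite UA ge0_integral_bigcup; try by [move=> n; exact: measurable_itv |
   rewrite -UA; exact: mg | move=> x _; exact: g0 | exact: tF].
apply: (@le_lt_trans _ _ (\sum_(n <oo) ((kap * phi n%:R)^-1)%:E)%E).
  apply: lee_nneseries => n _.
    by move=> _; apply: integral_ge0 => x _; exact: g0.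
  apply: (le_trans (y := (\int[lebesgue_measure]_(s in F n) (cst ((kap * phi n%:R)^-1)%:E) s)%E)).
    apply: ge0_le_integral.
    - exact: measurable_itv.
    - by move=> s _; exact: g0.
    - apply: measurable_funS mg; first exact: measurable_itv.
      by move=> s Fs; rewrite UA; exists n.
    - exact: measurable_cst.
    move=> s; rewrite /F /= in_itv /= => /andP[a _].
    have n1 : 1 <= n.+1%:R :> R by rewrite ler1n.
    have s1 : 0 <= s - 1 by lra.
    rewrite /g lee_fin lef_pV2 ?posrE ?mulr_gt0 ?phi_gt0 ?le_max ?lexx ?orbT//.
    rewrite (ler_pM2l k0) max_l//.
    apply: phi_mono => //; rewrite -natr1 in a; lra.
  rewrite integral_cst //; last exact: measurable_itv.
  have := @lebesgue_measure_itv R `[n.+1%:R, n.+2%:R[.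
  rewrite /= lte_fin ltr_nat ltnSn => ->.
  rewrite -EFinD -EFinM lee_fin -[X in _ * (X - _)]natr1 addrAC subrr add0r mulr1.
  by [].
set b := fun n : nat => ((1 - expR (-1)) / phi n%:R)%:E.
have e1 : 0 < 1 - expR (-1) :> R by rewrite subr_gt0 expR_lt1; lra.
set c := (kap * (1 - expR (-1)))^-1.
apply: (le_lt_trans (y := (\sum_(n <oo) (c%:E * b n))%E)).
  apply: lee_nneseries => n _.
    by move=> _; rewrite lee_fin invr_ge0 ltW// mulr_gt0// phi_gt0.
  have pn : 0 < phi n%:R by exact: phi_gt0.
  rewrite /b /c -EFinM lee_fin le_eqVlt; apply/orP; left; apply/eqP.
  field; rewrite ?gt_eqF //.
rewrite nneseriesZl; last first.
  by move=> n _; rewrite /b lee_fin divr_ge0 ?ltW ?phi_gt0.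
apply: lte_mul_pinfty.
- by rewrite lee_fin invr_ge0 ltW// mulr_gt0.
- by [].
- exact: le_lt_trans (sum_b_le) hint.
Qed.
Variable T0 : R.
Hypothesis cvx : forall x y l, T0 <= x -> T0 <= y -> 0 <= l <= 1 ->
     Psi (expR (- (l * x + (1 - l) * y)))
       <= l * Psi (expR (- x)) + (1 - l) * Psi (expR (- y)).

Local Notation ph := phi.

Definition TT := Num.max T0 0.
Definition kap := Psi 1 / ph TT.

Lemma TT_ge0 : 0 <= TT. Proof. by rewrite /TT le_max lexx orbT. Qed.
Lemma TT_geT0 : T0 <= TT. Proof. by rewrite /TT le_max lexx. Qed.
Lemma phiTT_gt0 : 0 < ph TT.
Proof. exact: (phi_gt0 _ TT_ge0). Qed.
Lemma kap_gt0 : 0 < kap.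
Proof. by rewrite /kap divr_gt0 // phiTT_gt0. Qed.
Lemma kap_le1 : kap <= 1.
Proof.
rewrite /kap ler_pdivrMr ?phiTT_gt0// mul1r.
exact: (phi_ge _ TT_ge0).
Qed.
Lemma kapE : kap * ph TT = Psi 1.
Proof. by rewrite /kap divfK // gt_eqF // phiTT_gt0. Qed.

Lemma psiof_mono (a b : R) : 0 <= a -> a <= b -> b <= 1 ->
  psi_of Psi a <= psi_of Psi b.
Proof.
move=> a0 ab b1; rewrite /psi_of.
have [bp|bn] := ltP 0 b; last by rewrite !ifT //; lra.
case: ifPn => [_|].
  by apply: mulr_ge0; [exact: ltW | apply: Psi_ge0; rewrite bp b1].
by rewrite -ltNge => ap; apply: psi_inc.
Qed.

Lemma psiof_ge (a : R) : 0 <= a <= 1 -> Psi 1 * a <= psi_of Psi a.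
Proof.
case/andP => a0 a1; rewrite /psi_of.
have [ap|an] := ltP 0 a; last first.
  have -> : a = 0 by lra.
  by rewrite mulr0.
rewrite mulrC (ler_wpM2l (ltW ap)) //; exact: (Psi_dec _ _ ap a1 (lexx 1)).
Qed.

Lemma pointB (m k : R) : TT < m -> 0 <= k ->
  (forall y, TT <= y -> ph m + k * (y - m) <= ph y) ->
  forall a, 0 <= a <= 1 ->
  kap * ph m * a + kap * k * psi0 a <= psi_of Psi a + kap * k * (m + 1) * a.
Proof.
move=> Tm k0 sub a /andP[a0 a1].
have [ap|an] := ltP 0 a; last first.
  have -> : a = 0 by lra.
  by rewrite /psi0 /psi_of lexx !mulr0 !addr0.
set u := - ln a.
have u0 : 0 <= u by rewrite /u oppr_ge0 ln_le0.
have ea : expR (- u) = a by rewrite /u opprK lnK // posrE.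
have Pa : psi_of Psi a = a * ph u by rewrite /psi_of leNgt ap /= /phi ea.
have Qa : psi0 a = a * (1 + u) by rewrite psi0E.
have key : kap * (ph m + k * (u - m)) <= ph u.
  have phu0 : 0 <= ph u := ltW (phi_gt0 _ u0).
  have kp := kap_gt0; have k1 := kap_le1.
  have [uT|Tu] := leP TT u.
    have hh := sub u uT; nra.
  have hh : ph m + k * (u - m) <= ph TT.
    have := sub TT (lexx _); nra.
  have := kapE; have := phi_ge _ u0; nra.
rewrite Pa Qa; nra.
Qed.

Section withN.
Variable N : R -> R.
Hypothesis N0 : forall t, 0 <= N t.
Hypothesis N1 : forall t, N t <= 1.
Hypothesis Nni : forall s t, s <= t -> N t <= N s.
Let D : set R := `[0%R, +oo[%classic.
Let mD : measurable D. Proof. exact: measurable_itv. Qed.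

Let mono_meas (F : R -> R) :
  (forall a b, 0 <= a -> a <= b -> b <= 1 -> F a <= F b) ->
  measurable_fun D (fun t => F (N t)).
Proof.
move=> Fm; apply: nonincr_on_measurable => s t _ _ st.
by apply: Fm; [exact: N0 | exact: Nni | exact: N1].
Qed.

Let mN : measurable_fun D N.
Proof. by apply: (mono_meas id). Qed.
Let mQ : measurable_fun D (fun t => psi0 (N t)).
Proof. apply: mono_meas => a b; exact: psi0_mono. Qed.
Let mP : measurable_fun D (fun t => psi_of Psi (N t)).
Proof. apply: mono_meas => a b; exact: psiof_mono. Qed.

Let int_lin (a b : R) (f g : R -> R) : 0 <= a -> 0 <= b ->
  (forall t, 0 <= f t) -> (forall t, 0 <= g t) ->
  measurable_fun D f -> measurable_fun D g ->
  (\int[lebesgue_measure]_(t in D) (a * f t + b * g t)%:E =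
   a%:E * \int[lebesgue_measure]_(t in D) (f t)%:E +
   b%:E * \int[lebesgue_measure]_(t in D) (g t)%:E)%E.
Proof.
move=> a0 b0 f0 g0 mf mg.
under eq_integral => t _ do rewrite EFinD EFinM EFinM.
have mf' : measurable_fun D (fun t => (f t)%:E) by apply/measurable_EFinP.
have mg' : measurable_fun D (fun t => (g t)%:E) by apply/measurable_EFinP.
rewrite ge0_integralD //.
- rewrite ge0_integralZl_EFin //; last by move=> t _; rewrite lee_fin.
  rewrite ge0_integralZl_EFin //; by move=> t _; rewrite lee_fin.
- by move=> t _; rewrite -EFinM lee_fin mulr_ge0.
- exact: measurable_funeM.
- by move=> t _; rewrite -EFinM lee_fin mulr_ge0.
- exact: measurable_funeM.
Qed.


Let N01 t : 0 <= N t <= 1. Proof. by rewrite N0 N1. Qed.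

Let P0 t : 0 <= psi_of Psi (N t).
Proof.
apply: (le_trans _ (psiof_ge _ (N01 t))).
by rewrite mulr_ge0 // ltW.
Qed.

Let Q0 t : 0 <= psi0 (N t).
Proof. exact: psi0_ge0. Qed.

Lemma mainN :
  let L := (\int[lebesgue_measure]_(t in D) (N t)%:E)%E in
  let S := (\int[lebesgue_measure]_(t in D) (psi0 (N t))%:E)%E in
  let Lam := (\int[lebesgue_measure]_(t in D) (psi_of Psi (N t))%:E)%E in
  (0 < L)%E -> (S < +oo)%E ->
  ((kap * ph (Num.max (fine S / fine L - 1) 0) / (fine S / fine L))%:E * S <= Lam)%E.
Proof.
move=> L S Lam Lpos Sfin.
have LS : (L <= S)%E.
  apply: ge0_le_integral => //.
  - by move=> t _; rewrite lee_fin.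
  - by apply/measurable_EFinP.
  - by apply/measurable_EFinP.
  - by move=> t _; rewrite lee_fin psi0_ge.
have L0 : (0 <= L)%E by exact: ltW.
have Lf : L \is a fin_num by rewrite ge0_fin_numE //; exact: le_lt_trans LS Sfin.
have Sf : S \is a fin_num by rewrite ge0_fin_numE ?(le_trans L0 LS).
set l := fine L; set s := fine S.
have eL : L = l%:E by rewrite /l fineK.
have eS : S = s%:E by rewrite /s fineK.
have lpos : 0 < l by rewrite -lte_fin -eL.
have ls : l <= s by rewrite -lee_fin -eL -eS.
set r := s / l.
have r1 : 1 <= r by rewrite /r ler_pdivlMr // mul1r.
have ers : r * l = s by rewrite /r divfK // gt_eqF.
rewrite eS -EFinM.
have eG : kap * ph (Num.max (r - 1) 0) / r * s = kap * ph (Num.max (r - 1) 0) * l.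
  rewrite -ers mulrA divfK // gt_eqF //; lra.
rewrite eG.
have mx : Num.max (r - 1) 0 = r - 1 by rewrite max_l //; lra.
have mP1 : measurable_fun D (fun t => 1 * psi_of Psi (N t) + 0 * N t).
  apply: measurable_funD; apply: measurable_funM => //; exact: measurable_cst.
have [rT|Tr] := leP (r - 1) TT.
- have G1 : kap * ph (Num.max (r - 1) 0) <= Psi 1.
    rewrite -kapE ler_pM2l ?kap_gt0 //; apply: phi_mono.
      by rewrite le_max lexx orbT.
    by rewrite ge_max rT TT_ge0.
  apply: (le_trans (y := (Psi 1 * l)%:E)); first by rewrite lee_fin ler_wpM2r // ltW.
  have -> : (Psi 1 * l)%:E =
     (\int[lebesgue_measure]_(t in D) (Psi 1 * N t + 0 * N t)%:E)%E.
    by rewrite int_lin // ?ltW // mul0e adde0 -/L eL.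
  have -> : Lam = (\int[lebesgue_measure]_(t in D) (1 * psi_of Psi (N t) + 0 * N t)%:E)%E.
    by rewrite int_lin // mul0e adde0 mul1e.
  apply: ge0_le_integral => //.
  - by move=> t _; rewrite lee_fin mul0r addr0 mulr_ge0 // ltW.
  - apply/measurable_EFinP; apply: measurable_funD; apply: measurable_funM => //;
      exact: measurable_cst.
  - by apply/measurable_EFinP.
  - by move=> t _; rewrite lee_fin !mul0r !addr0 mul1r psiof_ge.
- set m := r - 1.
  have cvx' x y l' : TT <= x -> TT <= y -> 0 <= l' <= 1 ->
      ph (l' * x + (1 - l') * y) <= l' * ph x + (1 - l') * ph y.
    move=> hx hy hl; apply: cvx => //.
      exact: le_trans TT_geT0 hx.
    exact: le_trans TT_geT0 hy.
  have mono' x y : TT <= x -> x <= y -> ph x <= ph y.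
    by move=> hx xy; apply: phi_mono => //; exact: le_trans TT_ge0 hx.
  have [k [k0 sub]] := subgrad _ _ _ _ cvx' mono' Tr.
  have kk : 0 <= kap * k by rewrite mulr_ge0 // ltW // kap_gt0.
  have H : (\int[lebesgue_measure]_(t in D) (kap * ph m * N t + kap * k * psi0 (N t))%:E <=
            \int[lebesgue_measure]_(t in D) (1 * psi_of Psi (N t) + kap * k * (m + 1) * N t)%:E)%E.
    apply: ge0_le_integral => //.
    - move=> t _; rewrite lee_fin addr_ge0 // mulr_ge0 // mulr_ge0 ?ltW ?kap_gt0 //.
      apply: phi_gt0; rewrite /m; lra.
    - apply/measurable_EFinP; apply: measurable_funD; apply: measurable_funM => //;
        exact: measurable_cst.
    - apply/measurable_EFinP; apply: measurable_funD; apply: measurable_funM => //;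
        exact: measurable_cst.
    - by move=> t _; rewrite lee_fin mul1r; apply: pointB.
  have phm : 0 <= kap * ph m.
    rewrite mulr_ge0 ?ltW ?kap_gt0 //; apply: phi_gt0; rewrite /m; lra.
  have m10 : 0 <= kap * k * (m + 1) by rewrite mulr_ge0 // /m; lra.
  rewrite int_lin // int_lin // -/L -/S -/Lam mul1e eL eS -!EFinM in H.
  have e3 : kap * k * s = kap * k * (m + 1) * l by rewrite -ers /m subrK mulrA.
  rewrite e3 in H.
  rewrite mx.
  by rewrite leeD2rE // in H.
Qed.
End withN.
End intbound.

Theorem lemma3p6 (d : measure_display) (T : measurableType d) (R : realType)
  (mu : probability T R) (Psi : R -> R) :
  atomless mu ->
  (forall s, 0 < s <= 1 -> 0 <= Psi s) ->
  0 < Psi 1 ->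
  (forall s t, 0 < s -> s <= t -> t <= 1 -> Psi t <= Psi s) ->
  (forall s t, 0 < s -> s <= t -> t <= 1 -> s * Psi s <= t * Psi t) ->
  (fun s => s * Psi s) x @[x --> 0^'+] --> 0 ->
  (\int[lebesgue_measure]_(s in `]0%R, 1%R]%classic) ((s * Psi s)^-1)%:E < +oo)%E ->
  (exists T0 : R, forall x y l, T0 <= x -> T0 <= y -> 0 <= l <= 1 ->
     Psi (expR (- (l * x + (1 - l) * y)))
       <= l * Psi (expR (- x)) + (1 - l) * Psi (expR (- y))) ->
  exists alpha : R -> R,
    [/\ (forall t, 1 <= t -> 0 < t * alpha t),
        (forall s t, 1 <= s -> s <= t -> s * alpha s <= t * alpha t),
        (\int[lebesgue_measure]_(t in `[1%R, +oo[%classic) ((t * alpha t)^-1)%:E < +oo)%E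
      & forall f : T -> R, measurable_fun setT f ->
          (0 < L1_norm mu f)%E -> (star_norm mu f < +oo)%E ->
          ((alpha (fine (star_norm mu f) / fine (L1_norm mu f)))%:E * star_norm mu f
             <= lorentz_norm mu (psi_of Psi) f)%E].
Proof.
move=> _ Psi_ge0 Psi1 Psi_dec psi_inc _ hint [T0 cvx].
set k := kap R Psi T0.
have k0 : 0 < k := @kap_gt0 R Psi Psi1 Psi_dec T0.
have tal t : 1 <= t ->
    t * (k * phi R Psi (Num.max (t - 1) 0) / t) = k * phi R Psi (Num.max (t - 1) 0).
  by move=> t1; rewrite mulrC divfK // gt_eqF //; lra.
have phpos t : 0 < phi R Psi (Num.max (t - 1) 0).
  by apply: phi_gt0 => //; rewrite le_max lexx orbT.
exists (fun t => k * phi R Psi (Num.max (t - 1) 0) / t); split.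
- by move=> t t1; rewrite tal // mulr_gt0.
- move=> s t s1 st; rewrite !tal //; last lra.
  rewrite ler_pM2l //; apply: phi_mono => //; first by rewrite le_max lexx orbT.
  rewrite !max_l; lra.
- suff -> : (\int[lebesgue_measure]_(t in `[1%R, +oo[%classic)
        ((t * (k * phi R Psi (Num.max (t - 1) 0) / t))^-1)%:E =
      \int[lebesgue_measure]_(t in `[1%R, +oo[%classic)
        ((k * phi R Psi (Num.max (t - 1) 0))^-1)%:E)%E.
    exact: int_alpha_lt.
  by apply: eq_integral => t; rewrite inE /= in_itv /= andbT => t1; rewrite tal.
- move=> f mf L0 Sfin.
  have hN0 t : 0 <= distr_fun mu f t by apply: N_ge0.
  have hN1 t : distr_fun mu f t <= 1 by apply: N_le1.
  have hNni s t : s <= t -> distr_fun mu f t <= distr_fun mu f s by apply: N_ni.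
  have H := @mainN R Psi Psi_ge0 Psi1 Psi_dec psi_inc T0 cvx _ hN0 hN1 hNni.
  rewrite L1_layer // in L0 *.
  exact: H L0 Sfin.
Qed.
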